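(* Let $\xi$ and $\eta_j$ be even unimodal probability densities on $\mathbb R$, $n>0$, $\nu_j>0$, and for $i=0,1$ let $I_{ij}(d)=\int_{-\infty}^\infty x^i\sqrt n\,\eta_j(\sqrt n(x-d))\,\nu_j\xi(\nu_jx)\,dx$. If $|I_{1j}(d)|<\infty$ for all $j$ and $d$, then $|I_{1j}(d)/I_{0j}(d)|\le|d|$ for all $j$ and all real $d$.
   Context: A density is unimodal (and even) here if it is symmetric about $0$ and nonincreasing on $[0,\infty)$. *)

(* Defs.v *)
From HB Require Import structures.
From mathcomp Require Import all_boot all_order all_algebra.
From mathcomp Require Import all_classical all_reals all_analysis.
Set Implicit Arguments. Unset Strict Implicit. Unset Printing Implicit Defensive.
Import Order.TTheory GRing.Theory Num.Theory.
Local Open Scope ring_scope.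
Local Open Scope classical_set_scope.

Definition even_unimodal_density (R : realType) (f : R -> R) : Prop :=
  [/\ measurable_fun setT f,
      (forall x, 0 <= f x),
      (\int[@lebesgue_measure R]_x (f x)%:E = 1)%E,
      (forall x, f (- x) = f x) &
      (forall x y, 0 <= x -> x <= y -> f y <= f x)].

Definition kern (R : realType) (xi eta : R -> R) (n nu d x : R) : R :=
  Num.sqrt n * eta (Num.sqrt n * (x - d)) * (nu * xi (nu * x)).

Definition Iint (R : realType) (i : nat) (xi eta : R -> R) (n nu d : R) : R :=
  Rintegral (@lebesgue_measure R) setT (fun x => x ^+ i * kern xi eta n nu d x).

(* Main.v *)
Set Warnings "-all".
From mathcomp Require Import ring lra.
Require Import Defs.
From HB Require Import structures.
From mathcomp Require Import all_boot all_order all_algebra.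
From mathcomp Require Import all_classical all_reals all_analysis.
From mathcomp Require Import measurable_realfun.
Import Order.TTheory GRing.Theory Num.Theory.
Local Open Scope ring_scope.
Local Open Scope classical_set_scope.

Section refl.
Context {R : realType}.
Local Notation mu := (@lebesgue_measure R).

Definition phi (c : R) : measurableTypeR R -> measurableTypeR R := fun x => c - x.
Lemma mrefl (c : R) : measurable_fun setT (phi c).
Proof. by apply: measurable_funB => //; exact: measurable_cst. Qed.

Lemma lebesgue_refl (c : R) (A : set R) : measurable A ->
  pushforward mu (phi c) A = mu A.
Proof.
move=> mA; apply/esym.
have := lebesgue_measure_unique (mu := measure_function_pushforward__canonical__measure_function_Measure mu (mrefl c)).
apply => // _ [[a b]] _ <-.
rewrite /= /pushforward /=.
have -> : (phi c) @^-1` `]a, b] = `[c - b, c - a[%classic.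
  apply/seteqP; split => x /=; rewrite /phi !in_itv /=.
  - by move=> /andP[h1 h2]; apply/andP; split; lra.
  - by move=> /andP[h1 h2]; apply/andP; split; lra.
rewrite !lebesgue_measure_itv /= !lte_fin.
have -> : (c - b < c - a) = (a < b) by apply/idP/idP; lra.
case: ifP => // _; congr EFin; lra.
Qed.

Lemma phiK (c x : R) : phi c (phi c x) = x.
Proof. by rewrite /phi opprB addrC subrK. Qed.

Lemma integrable_mu_push (c : R) (F : R -> \bar R) :
  (pushforward mu (phi c)).-integrable setT F -> mu.-integrable setT F.
Proof.
move=> /integrableP [mF iF]; apply/integrableP; split => //.
rewrite (eq_measure_integral (pushforward mu (phi c))).
- exact: mrefl.
- by move=> ?.
- move=> ? A mA _; symmetry; exact: (lebesgue_refl c A mA).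
Qed.


Lemma refl_int (c : R) (f : R -> R) : mu.-integrable setT (EFin \o f) ->
  mu.-integrable setT (fun x => (f (c - x))%:E) /\
  Rintegral mu setT f = Rintegral mu setT (fun x => f (c - x)).
Proof.
move=> intf.
have mf : measurable_fun setT f.
  by apply/measurable_EFinP; case/integrableP : intf.
have mg : measurable_fun setT (EFin \o (f \o phi c)).
  apply/measurable_EFinP; apply: measurableT_comp => //; exact: mrefl.
have intg' : mu.-integrable (phi c @^-1` setT) ((EFin \o (f \o phi c)) \o phi c).
  rewrite preimage_setT; refine (@eq_integrable _ _ _ mu setT measurableT (EFin \o f) ((EFin \o (f \o phi c)) \o phi c) _ intf) => x _ /=; by rewrite phiK.
have ig := integrable_pushforward (mrefl c) mg intg' measurableT.
split; first exact: integrable_mu_push ig.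
rewrite /Rintegral; congr fine.
have H := integral_pushforward (mrefl c) mg intg' measurableT.
rewrite preimage_setT in H.
have E : (\int[pushforward mu (phi c)]_y (EFin \o (f \o phi c)) y = \int[mu]_y (EFin \o (f \o phi c)) y)%E.
  apply: eq_measure_integral.
  all: try (move=> A mA _; exact: (lebesgue_refl c A mA)).
  all: try (move=> ? A mA _; exact: (lebesgue_refl c A mA)).
  all: try exact: mrefl.
rewrite -E H; apply: eq_integral => x _ /=; by rewrite phiK.
Qed.

Lemma abs_le_sq (u v : R) : u ^+ 2 <= v ^+ 2 -> `|u| <= `|v|.
Proof.
move=> h.
have [u0|u0] := leP 0 u; have [v0|v0] := leP 0 v;
  rewrite ?(ger0_norm u0) ?(ltr0_norm u0) ?(ger0_norm v0) ?(ltr0_norm v0); nra.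
Qed.

Lemma even_abs (f : R -> R) y : (forall x, f (- x) = f x) -> f y = f `|y|.
Proof.
move=> fe; have [y0|y0] := leP 0 y; first by rewrite ger0_norm.
by rewrite ltr0_norm // fe.
Qed.

Lemma scaled_mono (f : R -> R) (k : R) : 0 <= k ->
  (forall x, f (- x) = f x) -> (forall x y, 0 <= x -> x <= y -> f y <= f x) ->
  forall u v, u ^+ 2 <= v ^+ 2 -> k * f (k * v) <= k * f (k * u).
Proof.
move=> k0 fe fm u v uv; apply: ler_wpM2l => //.
rewrite (@even_abs f (k * v) fe) (@even_abs f (k * u) fe); apply: fm => //.
apply: abs_le_sq; rewrite !exprMn; apply: ler_wpM2l => //; exact: sqr_ge0.
Qed.

Lemma sym_nonneg (F : R -> R) c : mu.-integrable setT (EFin \o F) ->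
  (forall x, 0 <= F x + F (c - x)) -> 0 <= Rintegral mu setT F.
Proof.
move=> iF Fp; have [iF' E] := refl_int c F iF.
have : 0 <= Rintegral mu setT (fun x => F x + F (c - x)).
  by apply: Rintegral_ge0 => x _; exact: Fp.
rewrite RintegralD //; rewrite -E; lra.
Qed.

Lemma mono_eq (g : R -> R) : (forall u v, u ^+ 2 <= v ^+ 2 -> g v <= g u) ->
  forall u v, u ^+ 2 = v ^+ 2 -> g u = g v.
Proof.
move=> gm u v e; apply/le_anti/andP; split; apply: gm; rewrite e //.
Qed.

Section core.
Variables (g h : R -> R).
Hypotheses (g0 : forall y, 0 <= g y) (h0 : forall y, 0 <= h y).
Hypotheses (gm : forall u v, u ^+ 2 <= v ^+ 2 -> g v <= g u)
           (hm : forall u v, u ^+ 2 <= v ^+ 2 -> h v <= h u).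

Lemma pwA d x : 0 <= d ->
  0 <= (d * (g (x - d) * h x) - x * (g (x - d) * h x)) +
       (d * (g ((2 * d - x) - d) * h (2 * d - x)) - (2 * d - x) * (g ((2 * d - x) - d) * h (2 * d - x))).
Proof.
move=> d0.
have -> : g ((2 * d - x) - d) = g (x - d) by apply: mono_eq => //; ring.
have hx : 0 <= (d - x) * (h x - h (2 * d - x)).
  have [xd|xd] := leP x d.
  - have : h (2 * d - x) <= h x by apply: hm; nra.
    nra.
  - have : h x <= h (2 * d - x) by apply: hm; nra.
    nra.
have -> : d * (g (x - d) * h x) - x * (g (x - d) * h x) +
  (d * (g (x - d) * h (2 * d - x)) - (2 * d - x) * (g (x - d) * h (2 * d - x)))
  = g (x - d) * ((d - x) * (h x - h (2 * d - x))) by ring.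
exact: mulr_ge0.
Qed.

Lemma pwD d x : d < 0 ->
  0 <= (- d * (g (x - d) * h x) + x * (g (x - d) * h x)) +
       (- d * (g ((2 * d - x) - d) * h (2 * d - x)) + (2 * d - x) * (g ((2 * d - x) - d) * h (2 * d - x))).
Proof.
move=> d0.
have -> : g ((2 * d - x) - d) = g (x - d) by apply: mono_eq => //; ring.
have hx : 0 <= (x - d) * (h x - h (2 * d - x)).
  have [xd|xd] := leP x d.
  - have : h x <= h (2 * d - x) by apply: hm; nra.
    nra.
  - have : h (2 * d - x) <= h x by apply: hm; nra.
    nra.
have -> : - d * (g (x - d) * h x) + x * (g (x - d) * h x) +
  (- d * (g (x - d) * h (2 * d - x)) + (2 * d - x) * (g (x - d) * h (2 * d - x)))
  = g (x - d) * ((x - d) * (h x - h (2 * d - x))) by ring.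
exact: mulr_ge0.
Qed.

Lemma pwB d x : d < 0 ->
  0 <= (- d * (g (x - d) * h x) - x * (g (x - d) * h x)) +
       (- d * (g ((0 - x) - d) * h (0 - x)) - (0 - x) * (g ((0 - x) - d) * h (0 - x))).
Proof.
move=> d0.
have -> : h (0 - x) = h x by apply: mono_eq => //; ring.
have -> : g ((0 - x) - d) = g (x + d) by apply: mono_eq => //; ring.
have gx : 0 <= x * (g (x + d) - g (x - d)).
  have [x0|x0] := leP 0 x.
  - have : g (x - d) <= g (x + d) by apply: gm; nra.
    nra.
  - have : g (x + d) <= g (x - d) by apply: gm; nra.
    nra.
have -> : - d * (g (x - d) * h x) - x * (g (x - d) * h x) +
  (- d * (g (x + d) * h x) - (0 - x) * (g (x + d) * h x))
  = h x * (- d * (g (x - d) + g (x + d)) + x * (g (x + d) - g (x - d))) by ring.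
apply: mulr_ge0 => //.
have := g0 (x - d); have := g0 (x + d); nra.
Qed.

Lemma pwC d x : 0 <= d ->
  0 <= (d * (g (x - d) * h x) + x * (g (x - d) * h x)) +
       (d * (g ((0 - x) - d) * h (0 - x)) + (0 - x) * (g ((0 - x) - d) * h (0 - x))).
Proof.
move=> d0.
have -> : h (0 - x) = h x by apply: mono_eq => //; ring.
have -> : g ((0 - x) - d) = g (x + d) by apply: mono_eq => //; ring.
have gx : 0 <= x * (g (x - d) - g (x + d)).
  have [x0|x0] := leP 0 x.
  - have : g (x + d) <= g (x - d) by apply: gm; nra.
    nra.
  - have : g (x - d) <= g (x + d) by apply: gm; nra.
    nra.
have -> : d * (g (x - d) * h x) + x * (g (x - d) * h x) +
  (d * (g (x + d) * h x) + (0 - x) * (g (x + d) * h x))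
  = h x * (d * (g (x - d) + g (x + d)) + x * (g (x - d) - g (x + d))) by ring.
apply: mulr_ge0 => //.
have := g0 (x - d); have := g0 (x + d); nra.
Qed.


Lemma core_int d :
  mu.-integrable setT (EFin \o (fun x => g (x - d) * h x)) ->
  mu.-integrable setT (EFin \o (fun x => x * (g (x - d) * h x))) ->
  `|Rintegral mu setT (fun x => x * (g (x - d) * h x))| <=
    `|d| * Rintegral mu setT (fun x => g (x - d) * h x).
Proof.
move=> iK iX.
have iZ : mu.-integrable setT (EFin \o (fun x => `|d| * (g (x - d) * h x))).
  have := @integrableZl _ _ _ mu setT measurableT (`|d|) _ iK.
  refine (@eq_integrable _ _ _ mu setT measurableT _ _ _) => x _ /=.
  by rewrite EFinM.
have iB : mu.-integrable setT
    (EFin \o (fun x => `|d| * (g (x - d) * h x) - x * (g (x - d) * h x))).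
  have := @integrableB _ _ _ mu setT measurableT _ _ iZ iX.
  refine (@eq_integrable _ _ _ mu setT measurableT _ _ _) => x _ /=.
  by rewrite EFinB.
have iD : mu.-integrable setT
    (EFin \o (fun x => `|d| * (g (x - d) * h x) + x * (g (x - d) * h x))).
  have := @integrableD _ _ _ mu setT measurableT _ _ iZ iX.
  refine (@eq_integrable _ _ _ mu setT measurableT _ _ _) => x _ /=.
  by rewrite EFinD.
have H1 : 0 <= Rintegral mu setT
    (fun x => `|d| * (g (x - d) * h x) - x * (g (x - d) * h x)).
  have [d0|d0] := leP 0 d.
  - apply: (@sym_nonneg _ (2 * d)) => // x; rewrite ger0_norm //; exact: pwA.
  - apply: (@sym_nonneg _ 0) => // x; rewrite ltr0_norm //; exact: pwB.
have H2 : 0 <= Rintegral mu setT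
    (fun x => `|d| * (g (x - d) * h x) + x * (g (x - d) * h x)).
  have [d0|d0] := leP 0 d.
  - apply: (@sym_nonneg _ 0) => // x; rewrite ger0_norm //; exact: pwC.
  - apply: (@sym_nonneg _ (2 * d)) => // x; rewrite ltr0_norm //; exact: pwD.
rewrite RintegralB // RintegralZl // in H1.
rewrite RintegralD // RintegralZl // in H2.
rewrite ler_norml; apply/andP; split; lra.
Qed.

End core.
End refl.

Theorem lemma1 (R : realType) (J : Type) (xi : R -> R) (eta : J -> R -> R)
  (n : R) (nu : J -> R) :
  even_unimodal_density xi ->
  (forall j, even_unimodal_density (eta j)) ->
  0 < n ->
  (forall j, 0 < nu j) ->
  (forall j d, (@lebesgue_measure R).-integrable setT
                 (fun x => (x * kern xi (eta j) n (nu j) d x)%:E)) ->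
  forall j d, `| Iint 1 xi (eta j) n (nu j) d / Iint 0 xi (eta j) n (nu j) d | <= `|d|.
Proof.
move=> [mxi xi0 ixi xie xim] heta n0 nu0 hint j d.
have [meta eta0 ieta etae etam] := heta j.
pose g := fun y => Num.sqrt n * eta j (Num.sqrt n * y).
pose h := fun x => nu j * xi (nu j * x).
have g0 : forall y, 0 <= g y by move=> y; apply: mulr_ge0 => //; exact: sqrtr_ge0.
have h0 : forall y, 0 <= h y by move=> y; apply: mulr_ge0 => //; exact: ltW.
have gm := scaled_mono (eta j) (Num.sqrt n) (sqrtr_ge0 n) etae etam.
have hm := scaled_mono xi (nu j) (ltW (nu0 j)) xie xim.
have E1 : Iint 1 xi (eta j) n (nu j) d =
    Rintegral (@lebesgue_measure R) setT (fun x => x * (g (x - d) * h x)).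
  by rewrite /Iint /kern; apply: eq_Rintegral => x _; rewrite expr1.
have E0 : Iint 0 xi (eta j) n (nu j) d =
    Rintegral (@lebesgue_measure R) setT (fun x => g (x - d) * h x).
  by rewrite /Iint /kern; apply: eq_Rintegral => x _; rewrite expr0 mul1r.
rewrite E1 E0.
have [iK|niK] := boolP ((@lebesgue_measure R).-integrable setT
                          (EFin \o (fun x => g (x - d) * h x))).
  have := @core_int R g h g0 h0 gm hm d iK (hint j d).
  have I0 : 0 <= Rintegral (@lebesgue_measure R) setT (fun x => g (x - d) * h x).
    by apply: Rintegral_ge0 => x _; apply: mulr_ge0.
  move: I0.
  set I0 := Rintegral _ _ _; set I1 := Rintegral _ _ _ => I0ge H.
  have [->|I0ne] := eqVneq I0 0; first by rewrite invr0 mulr0 normr0.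
  have I0gt : 0 < I0 by rewrite lt_def I0ne.
  by rewrite normrM normfV (ger0_norm I0ge) ler_pdivrMr.
have mK : measurable_fun [set: R] (fun x : R => g (x - d) * h x).
  apply: measurable_funM.
    apply: measurable_funM; first exact: measurable_cst.
    apply: measurableT_comp => //; apply: measurable_funM; first exact: measurable_cst.
    apply: measurable_funB => //; exact: measurable_cst.
  apply: measurable_funM; first exact: measurable_cst.
  apply: measurableT_comp => //; apply: measurable_funM => //; exact: measurable_cst.
have -> : Rintegral (@lebesgue_measure R) setT (fun x => g (x - d) * h x) = 0.
  rewrite /Rintegral.
  have Hoo : ~~ (\int[@lebesgue_measure R]_x `|(g (x - d) * h x)%:E| < +oo)%E.
    apply/negP => Hlt; move/negP: niK; apply; apply/integrableP; split => //.
    exact/measurable_EFinP.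
  have -> : (\int[@lebesgue_measure R]_x ((g (x - d) * h x)%:E))%E = +oo%E.
    move: Hoo; rewrite ltey negbK => /eqP <-.
    apply: eq_integral => x _; rewrite gee0_abs // lee_fin; exact: mulr_ge0.
  by [].
by rewrite invr0 mulr0 normr0.
Qed.
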